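(* Suppose $\tau_f\in(\tau_2^i,\tau_c)$. Then for any $\tau_b\in(\tau_{po}(\tau_f),\tau_f)$, $$p'(\tau_b)<\frac{2h(\tau_b)-2h(\tau_f)}{\tau_b^2-\tau_f^2}<p'(\tau_f),$$ and Liu's extended entropy condition $\frac{2h(\tau_f)-2h(\tau_b)}{\tau_f^2-\tau_b^2}<\frac{2h(\tau_f)-2h(\tau)}{\tau_f^2-\tau^2}$ for all $\tau\in(\tau_b,\tau_f)$ holds.
   Context: The pressure is $p(\tau)=\frac{\mathcal S}{(\tau-1)^\gamma}-\frac{1}{\tau^2}$ for $\tau>1$, with constants $1<\gamma<2$, $\mathcal S>0$, assumed such that there exist $1<\tau_1^i<\tau_2^i$ with $p'<0$ on $(1,\infty)$, $p''>0$ on $(1,\tau_1^i)\cup(\tau_2^i,\infty)$, $p''<0$ on $(\tau_1^i,\tau_2^i)$. The function $h$ satisfies $h'(\tau)=\tau p'(\tau)$. $\tau_c$ is the unique $\tau_c\in(\tau_1^i,\infty)$ with $p'(\tau_1^i)=\frac{2h(\tau_c)-2h(\tau_1^i)}{\tau_c^2-(\tau_1^i)^2}$. For $\tau_f\in(\tau_2^i,\tau_c)$, $\tau_{po}(\tau_f)$ is the unique $\tau\in(\tau_1^i,\tau_2^i)$ with $p'(\tau)=\frac{2h(\tau)-2h(\tau_f)}{\tau^2-\tau_f^2}$. *)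

(* Defs.v *)
From Stdlib Require Import Reals.
From Coquelicot Require Import Coquelicot.
Open Scope R_scope.

(* The pressure p(tau) = S / (tau - 1)^gamma - 1 / tau^2 (meaningful for tau > 1;
   the real power uses Rpower, which is exp(gamma * ln(tau - 1))). *)
Definition pressure (S gamma : R) (tau : R) : R :=
  S / Rpower (tau - 1) gamma - 1 / tau ^ 2.

Definition chord (h : R -> R) (a b : R) : R :=
  (2 * h a - 2 * h b) / (a ^ 2 - b ^ 2).

(* Main.v *)
Require Import Defs.
From Stdlib Require Import Reals Lra.
From Coquelicot Require Import Coquelicot.
Open Scope R_scope.

Definition q0 S gamma t := - S * gamma / ((t-1) * exp(gamma * ln (t-1))) + 2 / t^3.

Lemma dp S gamma t : 1 < t -> is_derive (pressure S gamma) t (q0 S gamma t).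
Proof. intros Ht. unfold pressure, Rpower, q0. auto_derive.
  - repeat split; try lra. apply Rgt_not_eq, exp_pos. apply Rgt_not_eq. nra.
  - replace (t + - (1)) with (t - 1) by ring.
    assert (exp (gamma * ln (t - 1)) <> 0) by apply Rgt_not_eq, exp_pos.
    field. repeat split; try lra.
Qed.

Lemma q_ex S gamma t : 1 < t -> ex_derive (Derive (pressure S gamma)) t.
Proof. intros Ht.
  apply ex_derive_ext_loc with (q0 S gamma).
  - apply filter_imp with (fun u => 1 < u).
    + intros u Hu. symmetry. apply is_derive_unique, dp; auto.
    + apply (open_gt 1). exact Ht.
  - unfold q0. auto_derive. pose proof (exp_pos (gamma * ln (t + - (1)))).
    repeat split; try lra; apply Rgt_not_eq; nra.
Qed.

Lemma derR f x : ex_derive f x -> derivable_pt_lim f x (Derive f x).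
Proof. intros H. apply is_derive_Reals. apply Derive_correct. auto. Qed.

Lemma contR f x : ex_derive f x -> continuity_pt f x.
Proof. intros H. apply continuity_pt_filterlim. apply (ex_derive_continuous f x H). Qed.

Lemma lt_div_neg a x d : d < 0 -> x < a * d -> a < x / d.
Proof. intros. apply Rmult_lt_reg_r with (-d); [lra|].
  replace (x/d * -d) with (-x) by (field; lra). lra. Qed.

Lemma div_lt_neg a x d : d < 0 -> a * d < x -> x / d < a.
Proof. intros. apply Rmult_lt_reg_r with (-d); [lra|].
  replace (x/d * -d) with (-x) by (field; lra). lra. Qed.

Lemma div_neg_neg x y : x < 0 -> y < 0 -> 0 < x / y.
Proof. intros. replace (x/y) with ((-x) * / (-y)) by (field; lra).
  apply Rmult_lt_0_compat; [lra|]. apply Rinv_0_lt_compat; lra. Qed.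

Lemma chord_sym h a b : a^2 - b^2 <> 0 -> chord h a b = chord h b a.
Proof. intros. unfold chord. field. split; auto. intro; apply H; lra. Qed.

Theorem proposition3p4
  (S gamma : R) (h : R -> R) (tau1 tau2 tauc tauf taupo : R)
  (Hgamma : 1 < gamma < 2) (HS : 0 < S)
  (* shape assumptions on the pressure *)
  (H12 : 1 < tau1 < tau2)
  (Hp1 : forall t, 1 < t -> Derive (pressure S gamma) t < 0)
  (Hp2a : forall t, (1 < t < tau1 \/ tau2 < t) ->
            0 < Derive (Derive (pressure S gamma)) t)
  (Hp2b : forall t, tau1 < t < tau2 ->
            Derive (Derive (pressure S gamma)) t < 0)
  (* h' = tau p' *)
  (Hh : forall t, 1 < t -> is_derive h t (t * Derive (pressure S gamma) t))
  (* tau_c: the unique tau_c in (tau1, oo) with p'(tau1) = chord(tau_c, tau1) *)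
  (Hc : tau1 < tauc /\ Derive (pressure S gamma) tau1 = chord h tauc tau1)
  (Hcu : forall t, tau1 < t -> Derive (pressure S gamma) tau1 = chord h t tau1 -> t = tauc)
  (* tau_f in (tau2, tau_c) *)
  (Hf : tau2 < tauf < tauc)
  (* tau_po(tau_f): the unique tau in (tau1, tau2) with p'(tau) = chord(tau, tau_f) *)
  (Hpo : tau1 < taupo < tau2 /\ Derive (pressure S gamma) taupo = chord h taupo tauf)
  (Hpou : forall t, tau1 < t < tau2 ->
            Derive (pressure S gamma) t = chord h t tauf -> t = taupo) :
  forall taub, taupo < taub < tauf ->
    (Derive (pressure S gamma) taub < chord h taub tauf < Derive (pressure S gamma) tauf)
    /\ (forall t, taub < t < tauf -> chord h tauf taub < chord h tauf t).
Proof.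
  intros taub Hb.
  destruct Hpo as [Hpo1 _].
  assert (hq_ex : forall t, 1 < t -> ex_derive (Derive (pressure S gamma)) t)
    by (intros; apply q_ex; auto).
  set (q := Derive (pressure S gamma)) in *.
  assert (hD2 : forall t, Derive q t = Derive (Derive (pressure S gamma)) t) by reflexivity.
  clearbody q.
  assert (hh_ex : forall t, 1 < t -> ex_derive h t)
    by (intros t Ht; exists (t * q t); apply Hh; auto).
  assert (hDh : forall t, 1 < t -> Derive h t = t * q t)
    by (intros t Ht; apply is_derive_unique, Hh; auto).
  assert (qinc : forall a b, tau2 <= a < b -> q a < q b).
  { intros a b Hab.
    destruct (MVT_cor2 q (Derive q) a b) as [c [Kc1 Kc2]]; [lra| |].
    - intros c Kc. apply derR, hq_ex. lra.
    - assert (0 < Derive q c) by (apply Hp2a; right; lra).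
      nra. }
  assert (A1 : forall t, tau2 <= t < tauf -> q t < chord h t tauf).
  { intros t Ht.
    destruct (MVT_cor2 (fun s => 2*h s - 2*h t - q t * (s^2 - t^2))
                (fun s => 2*s*(q s - q t)) t tauf) as [c [Kc1 Kc2]]; [lra| |].
    - intros c Kc. apply is_derive_Reals. auto_derive.
      + apply hh_ex. lra.
      + rewrite hDh by lra. ring.
    - assert (q t < q c) by (apply qinc; lra).
      assert (0 < 2*c*(q c - q t)*(tauf - t)).
      { apply Rmult_lt_0_compat; [|lra]. apply Rmult_lt_0_compat; lra. }
      unfold chord. apply lt_div_neg. nra. nra. }
  assert (A2 : forall t, tau2 <= t < tauf -> chord h t tauf < q tauf).
  { intros t Ht.
    destruct (MVT_cor2 (fun s => 2*h s - 2*h tauf - q tauf * (s^2 - tauf^2))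
                (fun s => 2*s*(q s - q tauf)) t tauf) as [c [Kc1 Kc2]]; [lra| |].
    - intros c Kc. apply is_derive_Reals. auto_derive.
      + apply hh_ex. lra.
      + rewrite hDh by lra. ring.
    - assert (q c < q tauf) by (apply qinc; lra).
      assert (0 < 2*c*(q tauf - q c)*(tauf - t)).
      { apply Rmult_lt_0_compat; [|lra]. apply Rmult_lt_0_compat; lra. }
      unfold chord. apply div_lt_neg. nra. nra. }
  assert (hF : forall c, 1 < c < tauf ->
     is_derive (fun s => chord h s tauf) c (2*c*(q c - chord h c tauf)/(c^2 - tauf^2))).
  { intros c Kc. unfold chord. auto_derive.
    - split; [apply hh_ex; lra|]. split; [|auto]. nra.
    - rewrite hDh by lra. field. nra. }
  assert (B : forall t, taupo < t < tauf -> q t < chord h t tauf).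
  { intros t Ht. destruct (Rlt_or_le t tau2) as [Ht2|Ht2]; [|apply A1; lra].
    destruct (Rtotal_order (q t) (chord h t tauf)) as [E|[E|E]]; auto.
    - exfalso. assert (t = taupo) by (apply Hpou; auto; lra). lra.
    - exfalso.
      destruct (Ranalysis5.IVT_interv (fun s => chord h s tauf - q s) t tau2) as [z [Hz1 Hz2]].
      + intros a Ha. apply contR. exact (ex_derive_minus (fun s => chord h s tauf) q a (ex_intro _ _ (hF a ltac:(lra))) (hq_ex a ltac:(lra))).
      + lra.
      + lra.
      + assert (q tau2 < chord h tau2 tauf) by (apply A1; lra). lra.
      + simpl in Hz2.
        assert (z <> t) by (intro; subst; lra).
        assert (z <> tau2) by (intro; subst; assert (q tau2 < chord h tau2 tauf) by (apply A1; lra); lra).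
        assert (z = taupo) by (apply Hpou; lra). lra. }
  assert (Mono : forall a b, taupo < a < b -> b < tauf -> chord h a tauf < chord h b tauf).
  { intros a b Hab Hbf.
    destruct (MVT_cor2 (fun s => chord h s tauf)
                (fun c => 2*c*(q c - chord h c tauf)/(c^2 - tauf^2)) a b) as [c [Kc1 Kc2]]; [lra| |].
    - intros c Kc. apply is_derive_Reals. apply hF. lra.
    - assert (q c < chord h c tauf) by (apply B; lra).
      assert (0 < 2*c*(q c - chord h c tauf)/(c^2 - tauf^2)).
      { apply div_neg_neg. nra. nra. }
      nra. }
  split; [split|].
  - apply B; lra.
  - destruct (Rlt_or_le taub tau2) as [Ht2|Ht2].
    + assert (chord h taub tauf < chord h tau2 tauf) by (apply Mono; lra).
      assert (chord h tau2 tauf < q tauf) by (apply A2; lra). lra.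
    + apply A2; lra.
  - intros t Ht. rewrite (chord_sym h tauf taub) by nra.
    rewrite (chord_sym h tauf t) by nra. apply Mono; lra.
Qed.
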